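(* Let $\mathcal{M}$ be the class of Borel probability measures on $\mathbb{R}$ with non-negative mean, unit variance and finite third moment, and let $\mathcal{D}$ be the discretely supported Borel probability measures on $\mathbb{R}$. For $P\in\mathcal{M}\cup\mathcal{D}$ and $\boldsymbol{z}=(z_1,z_2,\dots)\in\mathbb{R}^\infty$ let $T_k(\boldsymbol z,P)=\sqrt k\big(\max\{k^{-1}\sum_{i=1}^kz_i,0\}-\max\{E_P[Z],0\}\big)$ and let $\psi_k(P)$ be the law of $T_k(\boldsymbol z,P)$ when $\boldsymbol z$ is drawn from the product measure $P^\infty$. Then for any $k\in\mathbb{N}$ and any $P,Q\in\mathcal{M}\cup\mathcal{D}$, $$\|\psi_k(P)-\psi_k(Q)\|_{LB}\le2\sqrt k\,\mathcal{W}(P,Q).$$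
   Context: $LB$ is the class of real-valued functions bounded by one and Lipschitz with constant one, and for probability measures $\mu,\nu$ on $\mathbb{R}$, $\|\mu-\nu\|_{LB}=\sup_{f\in LB}|\int fd\mu-\int fd\nu|$. $\mathcal{W}(P,Q)=\inf_{\zeta\in H(P,Q)}\int|z-z'|\zeta(dz,dz')$ is the Wasserstein-1 distance, $H(P,Q)$ being the set of Borel probability measures on $\mathbb{R}^2$ with marginals $P$ and $Q$. *)

(* Defs.v *)
From HB Require Import structures.
From mathcomp Require Import all_boot all_order all_algebra.
From mathcomp Require Import all_classical all_reals all_analysis.


Import Order.TTheory GRing.Theory Num.Theory.
Import numFieldNormedType.Exports.

Local Open Scope classical_set_scope.
Local Open Scope ring_scope.

Section Defs.
Context {R : realType}.

(* mean E_P[Z] of a probability measure on R (as a real number; when the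
   mean is finite this is exactly E_P[Z]) *)
Definition mean (P : probability R R) : R := fine (\int[P]_x x%:E)%E.

Definition inM (P : probability R R) : Prop :=
  [/\ (\int[P]_x (`|x| ^+ 3)%:E < +oo)%E,
      0 <= mean P &
      (\int[P]_x ((x - mean P) ^+ 2)%:E = 1)%E].

Definition inD (P : probability R R) : Prop :=
  exists S : set R, countable S /\ P S = 1%E.

Definition inMD (P : probability R R) : Prop := inM P \/ inD P.

Fixpoint prodk (P : probability R R) (k : nat) : set (k.-tuple R) -> \bar R :=
  match k return set (k.-tuple R) -> \bar R with
  | 0 => \d_([tuple] : 0.-tuple R)
  | n.+1 => pushforward (P \x prodk P n)%E
              (fun p : R * n.-tuple R => [tuple of p.1 :: p.2])
  end.

(* T_k(z, P), which only depends on the first k coordinates of z *)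
Definition Tk (k : nat) (P : probability R R) (z : k.-tuple R) : R :=
  Num.sqrt (k%:R) *
  (Num.max ((k%:R)^-1 * \sum_(i < k) tnth z i) 0 - Num.max (mean P) 0).

(* psi_k(P): the law of T_k(z,P) for z ~ P^infty (equivalently z ~ P^k) *)
Definition psik (k : nat) (P : probability R R) : set R -> \bar R :=
  pushforward (prodk P k) (Tk k P).

Definition LB (f : R -> R) : Prop :=
  (forall x, `|f x| <= 1) /\ (forall x y, `|f x - f y| <= `|x - y|).

Definition LBdist (mu nu : set R -> \bar R) : \bar R :=
  ereal_sup [set `| (\int[mu]_x (f x)%:E - \int[nu]_x (f x)%:E)%E |%E
            | f in LB].

Definition coupling (P Q : probability R R) (zeta : probability (R * R)%type R)
  : Prop :=
  (forall A : set R, measurable A -> zeta (fst @^-1` A) = P A) /\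
  (forall A : set R, measurable A -> zeta (snd @^-1` A) = Q A).

Definition W1 (P Q : probability R R) : \bar R :=
  ereal_inf [set (\int[zeta]_z (`|z.1 - z.2|)%:E)%E
            | zeta in coupling P Q].

End Defs.

(* Main.v *)
Require Import Defs.
From HB Require Import structures.
From mathcomp Require Import all_boot all_order all_algebra.
From mathcomp Require Import all_classical all_reals all_analysis.
From mathcomp Require Import measurable_realfun.
From mathcomp Require Import lra.

Import Order.TTheory GRing.Theory Num.Theory.
Import numFieldNormedType.Exports.
Local Open Scope classical_set_scope.
Local Open Scope ring_scope.

Section S.
Context {R : realType}.

Lemma bnd_integrable d (T : measurableType d) (mu : probability T R) (g : T -> R) (M : R) :
  measurable_fun setT g -> (forall x, `|g x| <= M) ->
  mu.-integrable setT (EFin \o g).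
Proof.
move=> mg gM; apply: measurable_bounded_integrable => //.
  exact: (le_lt_trans (probability_le1 mu measurableT) (ltry 1)).
exists M; split; first exact: num_real.
move=> N MN x _ /=; apply: le_trans (gM x) _; exact: ltW.
Qed.

Lemma lip_cont (f : R -> R) : (forall x y, `|f x - f y| <= `|x - y|) -> continuous f.
Proof.
move=> Hf a; apply/cvgrPdist_lt => e e0.
near=> t; apply: le_lt_trans (Hf a t) _.
near: t; first [ by apply: cvgr_dist_lt | by apply: (@cvgr_dist_lt _ _ _ _ id a) | exact: nbhs_ball_norm | (apply: nbhs_norm_ball ; idtac) ].
Unshelve. all: by end_near.
Qed.

Lemma marg_int (P Q : probability R R) (zeta : probability (R * R)%type R)
  (h : R -> \bar R) : coupling P Q zeta ->
  (\int[P]_x h x = \int[pushforward zeta fst]_x h x)%E /\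
  (\int[Q]_x h x = \int[pushforward zeta snd]_x h x)%E.
Proof.
move=> [H1 H2]; split; apply: eq_measure_integral => A mA _.
  exact: (esym (H1 A mA)).
exact: (esym (H2 A mA)).
Qed.


Lemma marg_gen (P : probability R R) (zeta : probability (R * R)%type R)
  (phi : R * R -> R) : measurable_fun setT phi ->
  (forall A, measurable A -> zeta (phi @^-1` A) = P A) ->
  forall h : R -> R, measurable_fun setT h ->
  (\int[P]_x `|(h x)%:E| = \int[zeta]_z `|(h (phi z))%:E|)%E /\
  (P.-integrable setT (EFin \o h) ->
   zeta.-integrable setT (EFin \o (h \o phi)) /\
   \int[P]_x h x = \int[zeta]_z h (phi z)).
Proof.
move=> mphi HP h mh.
have eP (f : R -> \bar R) : (\int[P]_x f x = \int[pushforward zeta phi]_x f x)%E.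
  by apply: eq_measure_integral => A mA _; exact: (esym (HP A mA)).
have eabs : (\int[P]_x `|(h x)%:E| = \int[zeta]_z `|(h (phi z))%:E|)%E.
  rewrite eP ge0_integral_pushforward //; last first.
    apply: (@measurableT_comp _ _ _ _ _ _ abse) => //; exact/measurable_EFinP.
split => // iP.
have iz : zeta.-integrable setT (EFin \o (h \o phi)).
  apply/integrableP; split; first exact/measurable_EFinP/measurableT_comp.
  by rewrite -eabs; case/integrableP: iP.
split => //; rewrite /Rintegral eP integral_pushforward //. exact/measurable_EFinP.
Qed.


Lemma intB_R d (T : measurableType d) (mu : {measure set T -> \bar R}) (f g : T -> R) :
  mu.-integrable setT (EFin \o f) -> mu.-integrable setT (EFin \o g) ->
  mu.-integrable setT (EFin \o (fun x => f x - g x)).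
Proof.
move=> iff ig.
rewrite (_ : EFin \o _ = ((EFin \o f) \- (EFin \o g))%E).
  exact: integrableB.
by apply/funext => x /=; rewrite EFinB.
Qed.

Lemma intZ_R d (T : measurableType d) (mu : {measure set T -> \bar R}) (f : T -> R) k :
  mu.-integrable setT (EFin \o f) ->
  mu.-integrable setT (EFin \o (fun x => k * f x)).
Proof.
move=> iff.
rewrite (_ : EFin \o _ = (fun x => k%:E * (EFin \o f) x)%E).
  exact: integrableZl.
by apply/funext => x /=; rewrite EFinM.
Qed.

Lemma intN_R d (T : measurableType d) (mu : {measure set T -> \bar R}) (f : T -> R) :
  mu.-integrable setT (EFin \o f) ->
  mu.-integrable setT (EFin \o (fun x => `|f x|)).
Proof. by move=> iff; apply: integrable_norm. Qed.

Lemma cost_integrable (zeta : probability (R * R)%type R) c :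
  (\int[zeta]_z (`|z.1 - z.2|)%:E)%E = c%:E ->
  zeta.-integrable setT (EFin \o (fun z : R * R => `|z.1 - z.2|)).
Proof.
move=> hc; apply/integrableP; split.
  apply/measurable_EFinP; apply: measurableT_comp => //.
  exact: measurable_funB.
under eq_integral do rewrite /= normr_id.
by rewrite hc ltry.
Qed.

Lemma coupling_lip (P Q : probability R R) (zeta : probability (R * R)%type R)
  (h : R -> R) (L c : R) :
  coupling P Q zeta -> measurable_fun setT h ->
  P.-integrable setT (EFin \o h) -> Q.-integrable setT (EFin \o h) ->
  (forall x y, `|h x - h y| <= L * `|x - y|) ->
  (\int[zeta]_z (`|z.1 - z.2|)%:E)%E = c%:E ->
  `| \int[P]_x h x - \int[Q]_x h x | <= L * c.
Proof.
move=> [H1 H2] mh iP iQ hL hc.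
have [_ /(_ iP) [i1 e1]] := @marg_gen P zeta fst measurable_fst H1 h mh.
have [_ /(_ iQ) [i2 e2]] := @marg_gen Q zeta snd measurable_snd H2 h mh.
have ic := @cost_integrable zeta c hc.
rewrite e1 e2 -RintegralB //.
apply: le_trans (le_normr_Rintegral _ _) _ => //.
  exact: intB_R.
apply: le_trans.
  apply: (@le_Rintegral _ _ _ _ _ _ (fun z : R * R => L * `|z.1 - z.2|)) => //.
  - apply: intN_R; exact: intB_R.
  - exact: intZ_R.
rewrite /= (@RintegralZl _ _ _ zeta setT (fun z : R * R => `|z.1 - z.2|)) //.
by rewrite /Rintegral hc /=.
Qed.


Definition consT n (p : R * n.-tuple R) : n.+1.-tuple R := [tuple of p.1 :: p.2].

Arguments consT {n}.

Lemma mcons n : measurable_fun setT (@consT n).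
Proof. exact: measurable_cons. Qed.

HB.instance Definition _ n := isMeasurableFun.Build _ _ _ _ (@consT n) (mcons n).

Lemma prodk_prob (P : probability R R) n :
  exists mu : probability (n.-tuple R) R, prodk P n = mu.
Proof.
elim: n => [|n [mu e]].
  by exists (\d_([tuple] : 0.-tuple R)).
exists (distribution (P \x mu)%E (@consT n)).
by rewrite /= e.
Qed.


Lemma int_succ (P : probability R R) n (mu : probability (n.-tuple R) R)
  (g : n.+1.-tuple R -> R) (M : R) :
  prodk P n = mu -> measurable_fun setT g -> (forall z, `|g z| <= M) ->
  (\int[prodk P n.+1]_z (g z)%:E)%E =
    (\int[P]_x (\int[mu]_y g (consT (x, y)))%:E)%E /\
  measurable_fun setT (fun x => \int[mu]_y g (consT (x, y))).
Proof.
move=> e mg gM.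
have mgc : measurable_fun setT (g \o @consT n).
  exact: measurableT_comp mg (mcons n).
have imf : (P \x mu)%E.-integrable setT (EFin \o (g \o @consT n)).
  by apply: (@bnd_integrable _ _ _ _ M) => // z; exact: gM.
have secI x : mu.-integrable setT (EFin \o (fun y => g (consT (x, y)))).
  apply: (@bnd_integrable _ _ _ _ M) => //.
  exact: measurableT_comp mg (measurableT_comp (mcons n) (pair1_measurable x)).
have FE : fubini_F mu (EFin \o (g \o @consT n)) =
    (fun x => (\int[mu]_y g (consT (x, y)))%:E).
  apply/funext => x; rewrite /fubini_F /Rintegral fineK //.
  exact: (integrable_fin_num _ (secI x)).
split.
  rewrite /= e.
  rewrite (integral_pushforward (phi := @consT n)) //; last first.
    exact/measurable_EFinP.
  rewrite -FE.
  rewrite preimage_setT; exact: (esym (integral12_prod_meas1 imf)).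
apply/measurable_EFinP.
have := measurable_fubini_F imf.
by rewrite FE.
Qed.


Lemma rint_bnd d (T : measurableType d) (mu : probability T R) (f : T -> R) (M : R) :
  measurable_fun setT f -> (forall x, `|f x| <= M) -> `|\int[mu]_x f x| <= M.
Proof.
move=> mf fM.
have iF : mu.-integrable setT (EFin \o f) by exact: (@bnd_integrable _ _ _ _ M).
apply: le_trans (le_normr_Rintegral _ _) _ => //.
apply: le_trans.
  apply: (@le_Rintegral _ _ _ _ _ _ (fun=> M)) => //.
  - exact: intN_R.
  - apply: (@bnd_integrable _ _ _ _ `|M|) => // x; done.
rewrite Rintegral_cst //.
rewrite (_ : fine _ = 1) ?mulr1 //.
exact: (congr1 fine (probability_setT mu)).
Qed.


Lemma tuple_lip (P Q : probability R R) (zeta : probability (R * R)%type R) (c : R) :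
  coupling P Q zeta -> (\int[zeta]_z (`|z.1 - z.2|)%:E)%E = c%:E ->
  forall n (g : n.-tuple R -> R) (M L : R),
  measurable_fun setT g -> (forall z, `|g z| <= M) ->
  (forall z z', `|g z - g z'| <= L * \sum_(i < n) `|tnth z i - tnth z' i|) ->
  `| fine (\int[prodk P n]_z (g z)%:E)%E - fine (\int[prodk Q n]_z (g z)%:E)%E |
    <= n%:R * L * c.
Proof.
move=> cpl hc; elim=> [|n IH] g M L mg gM gL.
  by rewrite subrr normr0 !mul0r.
have [muP eP] := prodk_prob P n.
have [muQ eQ] := prodk_prob Q n.
have [IP mGP] := @int_succ P n muP g M eP mg gM.
have [IQ mGQ] := @int_succ Q n muQ g M eQ mg gM.
rewrite IP IQ.
pose GP := fun x : R => \int[muP]_y g (consT (x, y)).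
pose GQ := fun x : R => \int[muQ]_y g (consT (x, y)).
change (`| \int[P]_x GP x - \int[Q]_x GQ x | <= n.+1%:R * L * c).
have mgx x : measurable_fun setT (fun y : n.-tuple R => g (consT (x, y))).
  exact: measurableT_comp mg (measurableT_comp (mcons n) (pair1_measurable x)).
have sumE x y y' : \sum_(i < n.+1) `|tnth (consT (x, y)) i - tnth (consT (x, y')) i| =
    \sum_(i < n) `|tnth y i - tnth y' i|.
  rewrite big_ord_recl /= subrr normr0 add0r; apply: eq_bigr => i _.
  by rewrite /consT !tnthS.
have sumE2 x x' y : \sum_(i < n.+1) `|tnth (consT (x, y)) i - tnth (consT (x', y)) i| =
    `|x - x'|.
  rewrite big_ord_recl /= big1 ?addr0 // => i _.
  by rewrite /consT !tnthS subrr normr0.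
have GPb x : `|GP x| <= M by apply: rint_bnd.
have GQb x : `|GQ x| <= M by apply: rint_bnd.
have dPQ x : `|GP x - GQ x| <= n%:R * L * c.
  have := IH (fun y => g (consT (x, y))) M L (mgx x) (fun y => gM _).
  rewrite eP eQ; apply => y y'.
  by rewrite -(sumE x); exact: gL.
have GQlip x x' : `|GQ x - GQ x'| <= L * `|x - x'|.
  have ix x0 : muQ.-integrable setT (EFin \o (fun y => g (consT (x0, y)))).
    exact: (@bnd_integrable _ _ _ _ M).
  rewrite /GQ -RintegralB //.
  apply: le_trans (le_normr_Rintegral _ _) _ => //.
    exact: intB_R.
  apply: le_trans.
    apply: (@le_Rintegral _ _ _ _ _ _ (fun=> L * `|x - x'|)) => //.
    - by apply: intN_R; exact: intB_R.
    - by apply: (@bnd_integrable _ _ _ _ `|L * `|x - x'| |) => // ?.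
    - by move=> y _; rewrite -(sumE2 x x' y); exact: gL.
  rewrite Rintegral_cst // (_ : fine _ = 1) ?mulr1 //.
  exact: (congr1 fine (probability_setT muQ)).
have iGP : P.-integrable setT (EFin \o GP) by exact: (@bnd_integrable _ _ _ _ M).
have iGQP : P.-integrable setT (EFin \o GQ) by exact: (@bnd_integrable _ _ _ _ M).
have iGQQ : Q.-integrable setT (EFin \o GQ) by exact: (@bnd_integrable _ _ _ _ M).
have T1 : `| \int[P]_x GP x - \int[P]_x GQ x | <= n%:R * L * c.
  rewrite -RintegralB //; apply: rint_bnd => //.
  exact: measurable_funB.
have T2 : `| \int[P]_x GQ x - \int[Q]_x GQ x | <= L * c.
  exact: (@coupling_lip P Q zeta GQ L c cpl mGQ iGQP iGQQ GQlip hc).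
rewrite (_ : \int[P]_x GP x - \int[Q]_x GQ x =
   (\int[P]_x GP x - \int[P]_x GQ x) + (\int[P]_x GQ x - \int[Q]_x GQ x)); last first.
  by rewrite addrA subrK.
apply: le_trans (ler_normD _ _) _.
apply: le_trans (lerD T1 T2) _.
by rewrite -[n.+1]addn1 natrD !mulrDl mul1r.
Qed.

Lemma maxlip (a b : R) : `|Num.max a 0 - Num.max b 0| <= `|a - b|.
Proof.
have [ha|ha] := leP a 0; have [hb|hb] := leP b 0.
all: rewrite ?(max_r ha) ?(max_l (ltW ha)) ?(max_r hb) ?(max_l (ltW hb)).
- by rewrite subrr normr0.
- rewrite sub0r normrN gtr0_norm // ler_normr; apply/orP; right; lra.
- rewrite subr0 gtr0_norm // ler_normr; apply/orP; left; lra.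
- done.
Qed.

Lemma int_transfer (P Q : probability R R) (zeta : probability (R * R)%type R)
  (phi1 phi2 : R * R -> R) (c : R) :
  measurable_fun setT phi1 -> measurable_fun setT phi2 ->
  (forall A, measurable A -> zeta (phi1 @^-1` A) = P A) ->
  (forall A, measurable A -> zeta (phi2 @^-1` A) = Q A) ->
  (\int[zeta]_z (`|phi1 z - phi2 z|)%:E)%E = c%:E ->
  P.-integrable setT (EFin \o (fun x : R => x)) ->
  Q.-integrable setT (EFin \o (fun x : R => x)).
Proof.
move=> m1 m2 H1 H2 hc iP.
have [e1 _] := @marg_gen P zeta phi1 m1 H1 (fun x => x) (@measurable_id _ _ setT).
have [e2 _] := @marg_gen Q zeta phi2 m2 H2 (fun x => x) (@measurable_id _ _ setT).
apply/integrableP; split; first exact/measurable_EFinP.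
rewrite e2.
apply: (@le_lt_trans _ _ (\int[zeta]_z ((`|phi1 z|)%:E + (`|phi1 z - phi2 z|)%:E))%E).
  apply: ge0_le_integral => //.
  - apply: (@measurableT_comp _ _ _ _ _ _ abse) => //; exact/measurable_EFinP.
  - apply: emeasurable_funD; apply/measurable_EFinP; apply: measurableT_comp => //.
    exact: measurable_funB.
  - move=> z _; rewrite /= lee_fin.
    rewrite -{1}(subrK (phi1 z) (phi2 z)) addrC (le_trans (ler_normD _ _)) //.
    by rewrite distrC addrC.
rewrite ge0_integralD //.
- rewrite hc lte_add_pinfty ?ltry //.
  under eq_integral do rewrite -abse_EFin.
  by rewrite -e1; case/integrableP: iP.
- apply/measurable_EFinP; apply: measurableT_comp => //.
- apply/measurable_EFinP; apply: measurableT_comp => //.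
  exact: measurable_funB.
Qed.


Lemma mean0 (P : probability R R) :
  ~ P.-integrable setT (EFin \o (fun x : R => x)) -> mean P = 0.
Proof.
move=> nP; rewrite /mean.
have nf : ~ ((\int[P]_x x%:E)%E \is a fin_num).
  rewrite -integral_fin_num_abs //.
  move=> h; apply: nP; apply/integrableP; split => //.
  exact/measurable_EFinP.
move: nf; case: (\int[P]_x x%:E)%E => //.
Qed.

Lemma mean_lip (P Q : probability R R) (zeta : probability (R * R)%type R) (c : R) :
  coupling P Q zeta -> (\int[zeta]_z (`|z.1 - z.2|)%:E)%E = c%:E ->
  `|Num.max (mean P) 0 - Num.max (mean Q) 0| <= c.
Proof.
move=> cpl hc; have [H1 H2] := cpl.
have c0 : 0 <= c.
  have : (0 <= c%:E)%E by rewrite -hc; apply: integral_ge0 => z _; rewrite lee_fin.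
  by rewrite lee_fin.
apply: le_trans (maxlip _ _) _.
have hc' : (\int[zeta]_z (`|z.2 - z.1|)%:E)%E = c%:E.
  by rewrite -hc; apply: eq_integral => z _; rewrite distrC.
case: (pselect (P.-integrable setT (EFin \o (fun x : R => x)))) => iP.
  have iQ := @int_transfer P Q zeta fst snd c measurable_fst measurable_snd H1 H2 hc iP.
  have := @coupling_lip P Q zeta (fun x => x) 1 c cpl (@measurable_id _ _ setT) iP iQ
    (fun x y => ltac:(by rewrite mul1r)) hc.
  by rewrite mul1r.
have nQ : ~ Q.-integrable setT (EFin \o (fun x : R => x)).
  move=> iQ; apply: iP.
  exact: (@int_transfer Q P zeta snd fst c measurable_snd measurable_fst H2 H1 hc' iQ).
by rewrite (@mean0 P iP) (@mean0 Q nQ) subrr normr0.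
Qed.


Lemma mTk k (P : probability R R) : measurable_fun setT (Tk k P).
Proof.
have mS : measurable_fun setT (fun z : k.-tuple R => \sum_(i < k) tnth z i).
  by apply: measurable_sum => i; exact: measurable_tnth.
rewrite (_ : Tk k P = cst (Num.sqrt k%:R) \* ((( *%R (k%:R)^-1) \o
   (fun z : k.-tuple R => \sum_(i < k) tnth z i)) \max cst 0 \- cst (Num.max (mean P) 0))).
  apply: measurable_funM => //.
  apply: measurable_funB => //.
  apply: measurable_maxr => //.
  apply: measurableT_comp mS; exact: mulrl_measurable.
by apply/funext => z.
Qed.

Lemma key k (P Q : probability R R) (zeta : probability (R * R)%type R) (c : R) :
  (0 < k)%N -> coupling P Q zeta -> (\int[zeta]_z (`|z.1 - z.2|)%:E)%E = c%:E ->
  forall f, LB f ->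
  (`| \int[psik k P]_x (f x)%:E - \int[psik k Q]_x (f x)%:E | <=
     (2 * Num.sqrt k%:R * c)%:E)%E.
Proof.
move=> k0 cpl hc f [fb fl].
set s := Num.sqrt k%:R.
have s0 : 0 <= s by exact: sqrtr_ge0.
have [muP eP] := prodk_prob P k.
have [muQ eQ] := prodk_prob Q k.
have mf : measurable_fun setT f.
  apply: continuous_measurable_fun; exact: lip_cont.
have mfT (P' : probability R R) : measurable_fun setT (f \o Tk k P').
  exact: measurableT_comp mf (mTk k P').
have iT (mu : probability (k.-tuple R) R) (P' : probability R R) :
    mu.-integrable setT (EFin \o (f \o Tk k P')).
  apply: (@bnd_integrable _ _ mu (f \o Tk k P') 1); first exact: mfT.
  by move=> z; exact: fb.
have pE (mu : probability (k.-tuple R) R) (P' : probability R R) :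
    (\int[pushforward mu (Tk k P')]_x (f x)%:E)%E = (\int[mu]_z f (Tk k P' z))%:E.
  rewrite (integral_pushforward (phi := Tk k P')) //.
  - by rewrite preimage_setT /Rintegral fineK //; exact: (integrable_fin_num _ (iT mu P')).
  - exact: mTk.
  - exact/measurable_EFinP.
  - by rewrite preimage_setT; exact: iT.
rewrite /psik eP eQ !pE -EFinB lee_fin.
rewrite (_ : \int[muP]_z f (Tk k P z) - \int[muQ]_z f (Tk k Q z) =
  (\int[muP]_z f (Tk k P z) - \int[muQ]_z f (Tk k P z)) +
  (\int[muQ]_z f (Tk k P z) - \int[muQ]_z f (Tk k Q z))); last first.
  by rewrite addrA subrK.
apply: le_trans (ler_normD _ _) _.
rewrite (_ : 2 * s * c = s * c + s * c); last by rewrite mulr2n -mulr2n mulr_natl mulr2n mulrDl.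
apply: lerD.
- have := @tuple_lip P Q zeta c cpl hc k (f \o Tk k P) 1 (s * (k%:R)^-1) (mfT P) (fun z => fb _).
  rewrite eP eQ => H.
  apply: le_trans (H _) _.
    move=> z z' /=; apply: le_trans (fl _ _) _.
    rewrite /Tk -mulrBr normrM (ger0_norm s0) -mulrA ler_wpM2l //.
    rewrite (_ : forall a b m : R, (a - m) - (b - m) = a - b); last by move=> a b m; rewrite opprB addrA subrK.
    apply: le_trans (maxlip _ _) _.
    rewrite -mulrBr -sumrB normrM ger0_norm ?invr_ge0 // ler_wpM2l ?invr_ge0 //.
    exact: ler_norm_sum.
  rewrite mulrCA mulfV ?mulr1 //.
  by rewrite pnatr_eq0 -lt0n.
- rewrite -RintegralB //.
  apply: (@rint_bnd _ _ muQ ((f \o Tk k P) \- (f \o Tk k Q))); first exact: measurable_funB.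
  move=> z /=; apply: le_trans (fl _ _) _.
  rewrite /Tk -mulrBr normrM (ger0_norm s0) ler_wpM2l //.
  rewrite (_ : forall a m n : R, (a - m) - (a - n) = n - m); last first.
    by move=> a m n; rewrite opprB addrC addrA subrK.
  by rewrite distrC; exact: (@mean_lip P Q zeta c cpl hc).
- exact: iT.
- exact: iT.
Qed.

End S.

Theorem proposition3 (R : realType) (k : nat) (P Q : probability R R) :
  (0 < k)%N -> inMD P -> inMD Q ->
  (LBdist (psik k P) (psik k Q) <= (2 * Num.sqrt (k%:R))%:E * W1 P Q)%E.
Proof.
move=> k0 _ _.
set s2 := 2 * Num.sqrt k%:R.
have s2gt0 : 0 < s2 by rewrite mulr_gt0 // sqrtr_gt0 ltr0n.
set L := LBdist _ _.
suff H : ((s2^-1)%:E * L <= W1 P Q)%E.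
  rewrite -[X in (X <= _)%E](_ : (s2%:E * ((s2^-1)%:E * L) = L)%E).
    by apply: lee_wpmul2l => //; rewrite lee_fin ltW.
  by rewrite muleA -EFinM mulfV ?gt_eqF // mul1e.
apply: le_ereal_inf_tmp => _ [zeta cpl <-].
have e0 : (0 <= \int[zeta]_z (`|z.1 - z.2|)%:E)%E.
  by apply: integral_ge0 => z _; rewrite lee_fin.
case E : (\int[zeta]_z (`|z.1 - z.2|)%:E)%E e0 => [c| |] // _; last by rewrite leey.
have key' : (L <= (s2 * c)%:E)%E.
  apply: ge_ereal_sup => _ [f hf <-].
  exact: (@key R k P Q zeta c k0 cpl E f hf).
apply: le_trans (lee_wpmul2l _ key') _.
  by rewrite lee_fin invr_ge0 ltW.
by rewrite -EFinM mulrA mulVf ?mul1r // gt_eqF.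
Qed.
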